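(* There exist a Banach algebra $A$ which is not nilpotent and a Banach $A$-bimodule $X$ such that $Mul_{2}(A,X)\subsetneq Mul_{3}(A,X)$.
   Context: A Banach algebra $A$ is nilpotent if there is $n\ge 2$ with $a_1a_2\cdots a_n=0$ for all $a_1,\dots,a_n\in A$. For $n\ge 2$, a bounded linear map $T:A\to X$ into a Banach $A$-bimodule is an $n$-multiplier if $T(a_1\cdots a_n)=a_1\cdot T(a_2\cdots a_n)=T(a_1\cdots a_{n-1})\cdot a_n$ for all $a_i\in A$; $Mul_n(A,X)$ is the set of all $n$-multipliers. *)

(* Defs.v *)
From Stdlib Require Import Reals.
Open Scope R_scope.

Definition C : Type := (R * R)%type.
Definition C0 : C := (0, 0).
Definition C1 : C := (1, 0).
Definition Cadd (z w : C) : C := (fst z + fst w, snd z + snd w).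
Definition Cmul (z w : C) : C :=
  (fst z * fst w - snd z * snd w, fst z * snd w + snd z * fst w).
Definition Cnorm (z : C) : R := sqrt (fst z * fst z + snd z * snd z).

Record BanachSpace := {
  bs_car :> Type;
  vadd : bs_car -> bs_car -> bs_car;
  vzero : bs_car;
  vopp : bs_car -> bs_car;
  vscal : C -> bs_car -> bs_car;
  vnorm : bs_car -> R;
  vadd_assoc : forall x y z, vadd x (vadd y z) = vadd (vadd x y) z;
  vadd_comm : forall x y, vadd x y = vadd y x;
  vadd_zero : forall x, vadd x vzero = x;
  vadd_opp : forall x, vadd x (vopp x) = vzero;
  vscal_one : forall x, vscal C1 x = x;
  vscal_assoc : forall c d x, vscal c (vscal d x) = vscal (Cmul c d) x;
  vscal_distr_v : forall c x y, vscal c (vadd x y) = vadd (vscal c x) (vscal c y);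
  vscal_distr_c : forall c d x, vscal (Cadd c d) x = vadd (vscal c x) (vscal d x);
  vnorm_nonneg : forall x, 0 <= vnorm x;
  vnorm_eq0 : forall x, vnorm x = 0 -> x = vzero;
  vnorm_triangle : forall x y, vnorm (vadd x y) <= vnorm x + vnorm y;
  vnorm_scal : forall c x, vnorm (vscal c x) = Cnorm c * vnorm x;
  vcomplete : forall u : nat -> bs_car,
    (forall eps, 0 < eps -> exists N, forall m n, (N <= m)%nat -> (N <= n)%nat ->
        vnorm (vadd (u m) (vopp (u n))) < eps) ->
    exists l, forall eps, 0 < eps -> exists N, forall n, (N <= n)%nat ->
        vnorm (vadd (u n) (vopp l)) < eps
}.

Arguments vadd {_}. Arguments vzero {_}. Arguments vopp {_}.
Arguments vscal {_}. Arguments vnorm {_}.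

Record BanachAlgebra := {
  ba_sp :> BanachSpace;
  amul : ba_sp -> ba_sp -> ba_sp;
  amul_assoc : forall a b c, amul a (amul b c) = amul (amul a b) c;
  amul_addl : forall a b c, amul (vadd a b) c = vadd (amul a c) (amul b c);
  amul_addr : forall a b c, amul a (vadd b c) = vadd (amul a b) (amul a c);
  amul_scall : forall k a b, amul (vscal k a) b = vscal k (amul a b);
  amul_scalr : forall k a b, amul a (vscal k b) = vscal k (amul a b);
  amul_norm : forall a b, vnorm (amul a b) <= vnorm a * vnorm b
}.

Arguments amul {_}.

Record BanachBimodule (A : BanachAlgebra) := {
  bm_sp :> BanachSpace;
  lact : A -> bm_sp -> bm_sp;
  ract : bm_sp -> A -> bm_sp;
  lact_addl : forall a b x, lact (vadd a b) x = vadd (lact a x) (lact b x);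
  lact_addr : forall a x y, lact a (vadd x y) = vadd (lact a x) (lact a y);
  lact_scall : forall k a x, lact (vscal k a) x = vscal k (lact a x);
  lact_scalr : forall k a x, lact a (vscal k x) = vscal k (lact a x);
  ract_addl : forall x y a, ract (vadd x y) a = vadd (ract x a) (ract y a);
  ract_addr : forall x a b, ract x (vadd a b) = vadd (ract x a) (ract x b);
  ract_scall : forall k x a, ract (vscal k x) a = vscal k (ract x a);
  ract_scalr : forall k x a, ract x (vscal k a) = vscal k (ract x a);
  lact_assoc : forall a b x, lact a (lact b x) = lact (amul a b) x;
  ract_assoc : forall x a b, ract (ract x a) b = ract x (amul a b);
  lract_assoc : forall a x b, ract (lact a x) b = lact a (ract x b);
  lact_norm : forall a x, vnorm (lact a x) <= vnorm a * vnorm x;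
  ract_norm : forall x a, vnorm (ract x a) <= vnorm x * vnorm a
}.

Arguments lact {_ _}. Arguments ract {_ _}.

Definition bounded_linear {V W : BanachSpace} (T : V -> W) : Prop :=
  (forall x y, T (vadd x y) = vadd (T x) (T y)) /\
  (forall c x, T (vscal c x) = vscal c (T x)) /\
  (exists M, forall x, vnorm (T x) <= M * vnorm x).

(** [aprod a i k] = a_i a_(i+1) ... a_(i+k)  (k+1 factors). *)
Fixpoint aprod {A : BanachAlgebra} (a : nat -> A) (i k : nat) : A :=
  match k with
  | O => a i
  | S k' => amul (aprod a i k') (a (i + S k')%nat)
  end.

(** Nilpotent: some n >= 2 with a_1 ... a_n = 0 for all a_1..a_n
    (here indexed a_0 ... a_(n-1)). *)
Definition nilpotent (A : BanachAlgebra) : Prop :=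
  exists n : nat, (2 <= n)%nat /\
    forall a : nat -> A, aprod a 0 (n - 1) = vzero.

(** n-multipliers, n >= 2: with a_1..a_n indexed as a 0 .. a (n-1),
    T(a_1...a_n) = a_1 . T(a_2...a_n) = T(a_1...a_(n-1)) . a_n. *)
Definition is_n_multiplier {A : BanachAlgebra} {X : BanachBimodule A}
  (n : nat) (T : A -> X) : Prop :=
  bounded_linear T /\
  forall a : nat -> A,
    T (aprod a 0 (n - 1)) = lact (a 0%nat) (T (aprod a 1 (n - 2))) /\
    T (aprod a 0 (n - 1)) = ract (T (aprod a 0 (n - 2))) (a (n - 1)%nat).

Definition Mul (n : nat) (A : BanachAlgebra) (X : BanachBimodule A) : (A -> X) -> Prop :=
  fun T => is_n_multiplier n T.

(* Main.v *)
Require Import Defs.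
From Stdlib Require Import Reals Lra Psatz.
From Coquelicot Require Complex.

Open Scope R_scope.

Lemma Cnorm_Cmod z : Cnorm z = Complex.Cmod z.
Proof. unfold Cnorm, Complex.Cmod. f_equal. simpl. ring. Qed.

Lemma Cnorm_mul z w : Cnorm (Cmul z w) = Cnorm z * Cnorm w.
Proof. rewrite !Cnorm_Cmod. apply Complex.Cmod_mult. Qed.

Lemma Cnorm_tri z w : Cnorm (Cadd z w) <= Cnorm z + Cnorm w.
Proof. rewrite !Cnorm_Cmod. apply Complex.Cmod_triangle. Qed.

Lemma Cnorm_pos z : 0 <= Cnorm z.
Proof. apply sqrt_pos. Qed.

Lemma Cnorm_C0 : Cnorm Defs.C0 = 0.
Proof. unfold Cnorm, Defs.C0; simpl. rewrite Rmult_0_l, Rplus_0_l. apply sqrt_0. Qed.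

Lemma Cnorm_eq0 z : Cnorm z = 0 -> z = Defs.C0.
Proof.
  unfold Cnorm; destruct z as [a b]; simpl; intro H.
  apply sqrt_eq_0 in H; [|nra].
  assert (a = 0) by nra. assert (b = 0) by nra. subst; reflexivity.
Qed.

Lemma Cnorm_re z : Rabs (fst z) <= Cnorm z.
Proof.
  unfold Cnorm. rewrite <- sqrt_Rsqr_abs. apply sqrt_le_1_alt. unfold Rsqr. nra.
Qed.

Lemma Cnorm_im z : Rabs (snd z) <= Cnorm z.
Proof.
  unfold Cnorm. rewrite <- sqrt_Rsqr_abs. apply sqrt_le_1_alt. unfold Rsqr. nra.
Qed.

Lemma sq_abs a : a * a = Rabs a * Rabs a.
Proof. rewrite <- Rabs_mult. symmetry. apply Rabs_pos_eq. nra. Qed.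

Lemma Cnorm_le z : Cnorm z <= Rabs (fst z) + Rabs (snd z).
Proof.
  unfold Cnorm. pose proof (Rabs_pos (fst z)). pose proof (Rabs_pos (snd z)).
  rewrite <- (sqrt_Rsqr (Rabs (fst z) + Rabs (snd z))) by lra.
  apply sqrt_le_1_alt. unfold Rsqr. rewrite (sq_abs (fst z)), (sq_abs (snd z)). nra.
Qed.

Definition Copp (z : Defs.C) : Defs.C := (- fst z, - snd z).

Lemma C_cauchy (u : nat -> Defs.C) :
    (forall eps, 0 < eps -> exists N, forall m n, (N <= m)%nat -> (N <= n)%nat ->
        Cnorm (Cadd (u m) (Copp (u n))) < eps) ->
    exists l, forall eps, 0 < eps -> exists N, forall n, (N <= n)%nat ->
        Cnorm (Cadd (u n) (Copp l)) < eps.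
Proof.
  intros H.
  assert (H1 : Cauchy_crit (fun n => fst (u n))).
  { intros eps Heps. destruct (H eps Heps) as [N HN]. exists N. intros n m Hn Hm.
    unfold Rdist. eapply Rle_lt_trans; [|apply (HN n m); lia].
    eapply Rle_trans; [|apply Cnorm_re]. simpl. unfold Rminus. lra. }
  assert (H2 : Cauchy_crit (fun n => snd (u n))).
  { intros eps Heps. destruct (H eps Heps) as [N HN]. exists N. intros n m Hn Hm.
    unfold Rdist. eapply Rle_lt_trans; [|apply (HN n m); lia].
    eapply Rle_trans; [|apply Cnorm_im]. simpl. unfold Rminus. lra. }
  destruct (R_complete _ H1) as [l1 Hl1]. destruct (R_complete _ H2) as [l2 Hl2].
  exists (l1, l2). intros eps Heps.
  destruct (Hl1 (eps/2)) as [N1 HN1]; [lra|].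
  destruct (Hl2 (eps/2)) as [N2 HN2]; [lra|].
  exists (Nat.max N1 N2). intros n Hn.
  eapply Rle_lt_trans; [apply Cnorm_le|]. simpl.
  specialize (HN1 n ltac:(lia)). specialize (HN2 n ltac:(lia)).
  unfold Rdist, Rminus in *. lra.
Qed.

Ltac crush := intros; repeat match goal with
  | x : ?T |- _ => let T' := eval hnf in T in
      match T' with prod _ _ => destruct x end
  end; unfold Cadd, Cmul, Copp, Defs.C0, Defs.C1 in *; simpl;
  repeat (apply injective_projections; simpl); ring.

Definition CB : BanachSpace.
Proof.
  refine {| bs_car := Defs.C; vadd := Cadd; vzero := Defs.C0; vopp := Copp; vscal := Cmul;
            vnorm := Cnorm |}.
  all: try (intros; crush).
  - apply Cnorm_pos.
  - apply Cnorm_eq0.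
  - apply Cnorm_tri.
  - apply Cnorm_mul.
  - apply C_cauchy.
Defined.

Section Prod.
Variables V W : BanachSpace.

Lemma prod_cauchy (u : nat -> (V * W)%type) :
  (forall eps, 0 < eps -> exists N, forall m n, (N <= m)%nat -> (N <= n)%nat ->
        vnorm (vadd (fst (u m)) (vopp (fst (u n)))) + vnorm (vadd (snd (u m)) (vopp (snd (u n)))) < eps) ->
  exists l : (V * W)%type, forall eps, 0 < eps -> exists N, forall n, (N <= n)%nat ->
        vnorm (vadd (fst (u n)) (vopp (fst l))) + vnorm (vadd (snd (u n)) (vopp (snd l))) < eps.
Proof.
  intros H.
  destruct (vcomplete V (fun n => fst (u n))) as [l1 Hl1].
  { intros eps Heps. destruct (H eps Heps) as [N HN]. exists N. intros m n Hm Hn.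
    specialize (HN m n Hm Hn). pose proof (vnorm_nonneg W (vadd (snd (u m)) (vopp (snd (u n))))). lra. }
  destruct (vcomplete W (fun n => snd (u n))) as [l2 Hl2].
  { intros eps Heps. destruct (H eps Heps) as [N HN]. exists N. intros m n Hm Hn.
    specialize (HN m n Hm Hn). pose proof (vnorm_nonneg V (vadd (fst (u m)) (vopp (fst (u n))))). lra. }
  exists (l1, l2). intros eps Heps.
  destruct (Hl1 (eps/2)) as [N1 HN1]; [lra|].
  destruct (Hl2 (eps/2)) as [N2 HN2]; [lra|].
  exists (Nat.max N1 N2). intros n Hn.
  specialize (HN1 n ltac:(lia)). specialize (HN2 n ltac:(lia)). simpl. lra.
Qed.

Definition prodB : BanachSpace.
Proof.
  refine {| bs_car := (V * W)%type;
            vadd := fun x y => (vadd (fst x) (fst y), vadd (snd x) (snd y));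
            vzero := (vzero, vzero);
            vopp := fun x => (vopp (fst x), vopp (snd x));
            vscal := fun c x => (vscal c (fst x), vscal c (snd x));
            vnorm := fun x => vnorm (fst x) + vnorm (snd x) |}.
  - intros; simpl; f_equal; apply vadd_assoc.
  - intros; simpl; f_equal; apply vadd_comm.
  - intros [a b]; simpl; f_equal; apply vadd_zero.
  - intros; simpl; f_equal; apply vadd_opp.
  - intros [a b]; simpl; f_equal; apply vscal_one.
  - intros; simpl; f_equal; apply vscal_assoc.
  - intros; simpl; f_equal; apply vscal_distr_v.
  - intros; simpl; f_equal; apply vscal_distr_c.
  - intros; pose proof (vnorm_nonneg V (fst x)); pose proof (vnorm_nonneg W (snd x)); lra.
  - intros [a b] Hn; simpl in *.
    pose proof (vnorm_nonneg V a); pose proof (vnorm_nonneg W b).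
    f_equal; apply vnorm_eq0; lra.
  - intros; simpl. pose proof (vnorm_triangle V (fst x) (fst y)).
    pose proof (vnorm_triangle W (snd x) (snd y)). lra.
  - intros; simpl. rewrite !vnorm_scal. ring.
  - apply prod_cauchy.
Defined.
End Prod.

Definition A3 : BanachSpace := prodB CB (prodB CB CB).

Definition mul3 (a b : A3) : A3 :=
  (Cmul (fst a) (fst b), (Defs.C0, Cmul (fst (snd a)) (fst (snd b)))).

Lemma CB_norm (z : CB) : vnorm z = Cnorm z. Proof. reflexivity. Qed.

Definition AA : BanachAlgebra.
Proof.
  refine {| ba_sp := A3; amul := mul3 |}.
  all: try (intros; unfold mul3; simpl; crush).
  intros [a1 [a2 a3]] [b1 [b2 b3]]. unfold mul3; simpl.
  change (Cnorm (Cmul a1 b1) + (Cnorm Defs.C0 + Cnorm (Cmul a2 b2)) <= (Cnorm a1 + (Cnorm a2 + Cnorm a3)) * (Cnorm b1 + (Cnorm b2 + Cnorm b3))).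
  rewrite !Cnorm_mul, Cnorm_C0.
  pose proof (Cnorm_pos a1); pose proof (Cnorm_pos a2); pose proof (Cnorm_pos a3);
  pose proof (Cnorm_pos b1); pose proof (Cnorm_pos b2); pose proof (Cnorm_pos b3). nra.
Defined.

Definition XX : BanachBimodule AA.
Proof.
  refine {| bm_sp := CB; lact := fun _ _ => Defs.C0; ract := fun _ _ => Defs.C0 |}.
  all: try (intros; simpl; crush).
  all: intros a b; change (Cnorm Defs.C0 <= vnorm a * vnorm b); rewrite Cnorm_C0;
    pose proof (vnorm_nonneg _ a); pose proof (vnorm_nonneg _ b); nra.
Defined.

Definition TT (a : AA) : XX := snd (snd a).

Lemma TT_bl : bounded_linear (W := XX) TT.
Proof.
  split; [intros; reflexivity|]. split; [intros; reflexivity|].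
  exists 1. intros [a1 [a2 a3]].
  change (Cnorm a3 <= 1 * (Cnorm a1 + (Cnorm a2 + Cnorm a3))).
  pose proof (Cnorm_pos a1); pose proof (Cnorm_pos a2); lra.
Qed.

Definition e1 : AA := (Defs.C1, (Defs.C0, Defs.C0)).

Lemma aprod_e k : aprod (fun _ => e1) 0 k = e1.
Proof.
  induction k; [reflexivity|]. simpl. rewrite IHk.
  unfold e1. change (mul3 (Defs.C1, (Defs.C0, Defs.C0)) (Defs.C1, (Defs.C0, Defs.C0)) = (Defs.C1, (Defs.C0, Defs.C0))).
  unfold mul3; simpl. crush.
Qed.

Theorem theorem2p6 :
  exists (A : BanachAlgebra) (X : BanachBimodule A),
    ~ nilpotent A /\
    (forall T : A -> X, Mul 2 A X T -> Mul 3 A X T) /\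
    (exists T : A -> X, Mul 3 A X T /\ ~ Mul 2 A X T).
Proof.
  exists AA, XX. split; [|split].
  - intros [n [_ Hn]]. specialize (Hn (fun _ => e1)). rewrite aprod_e in Hn.
    unfold e1 in Hn. change ((Defs.C1, (Defs.C0, Defs.C0)) = (Defs.C0, (Defs.C0, Defs.C0))) in Hn.
    unfold Defs.C1, Defs.C0 in Hn. injection Hn as H. lra.
  - intros T [Hbl HT]. split; [exact Hbl|]. intros a.
    specialize (HT (fun i => match i with 0%nat => amul (a 0%nat) (a 1%nat) | _ => a 2%nat end)).
    simpl in HT |- *. destruct HT as [HT _]. split; exact HT.
  - exists TT. split.
    + split; [apply TT_bl|]. intros a. simpl.
      assert (H : TT (mul3 (mul3 (a 0%nat) (a 1%nat)) (a 2%nat)) = Defs.C0).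
      { unfold TT, mul3; simpl. crush. }
      split; exact H.
    + intros [_ H]. destruct (H (fun _ => ((Defs.C0, (Defs.C1, Defs.C0)) : AA))) as [H1 _].
      change (TT (mul3 (Defs.C0, (Defs.C1, Defs.C0)) (Defs.C0, (Defs.C1, Defs.C0))) = Defs.C0) in H1.
      unfold TT, mul3 in H1; simpl in H1. unfold Cmul, Defs.C1, Defs.C0 in H1; simpl in H1.
      injection H1 as H1. lra.
Qed.
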